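(* For all integers $n,d,p\ge 0$, $$P_p(n,\omega^d)=\begin{cases}0 & d=0,\ n\ge 2\\ 1 & n=0,\ p=0\\ 0 & n=0,\ p\ge 1\\ 1 & d=0,\ n=1,\ p=0\\ 0 & d=0,\ n=1,\ p\ge 1\\ 1 & d=1,\ n\ge 1,\ n=p\\ 0 & d=1,\ n\ge1,\ n\ne p\\ 0 & d\ge 2,\ n\ge 1,\ p=0\\ \displaystyle\sum_{j=1}^{n}\sum_{i=0}^{p-1}\binom{p-1}{i}P_i(j,\omega^{d-1})\,P_{p-1-i}(n-j,\omega^{d}) & d\ge2,\ n\ge1,\ p\ge1.\end{cases}$$
   Context: Coloring rules. Fix integers $n,d,k\ge 0$. Every ordinal $\beta<\omega^d\cdot k$ is uniquely written $\beta=\omega^d\cdot b+\omega^{d-1}a_{d-1}+\cdots+\omega a_1+a_0$ with $0\le b<k$ and $a_j\in\mathbb{N}$. A coloring rule (CR) on $\binom{\omega^d\cdot k}{n}$ is a pair $(\mathcal{Y},\preceq)$ where $\mathcal{Y}:\{1,\dots,n\}\to\{0,\dots,k-1\}$ (one writes $b_i=\mathcal{Y}(i)$) and $\preceq$ is a total preorder on the index set $I=\{(i,j):1\le i\le n,\ 0\le j<d\}$ (one thinks of $(i,j)$ as a variable $a_{i,j}$; write $(i,j)\equiv(i',j')$ if both $(i,j)\preceq(i',j')$ and $(i',j')\preceq(i,j)$, and $(i,j)\prec(i',j')$ if $(i,j)\preceq(i',j')$ but not $(i',j')\preceq(i,j)$), satisfying: (1) if $d\ge1$ then $(i,0)\prec(i',0)$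 whenever $i<i'$; if $d=0$ then $\mathcal{Y}(i)<\mathcal{Y}(i')$ whenever $i<i'$; (2) if $(i,j)\equiv(i',j)$ for some $j$, then $\mathcal{Y}(i)=\mathcal{Y}(i')$; (3) $(i,j)\prec(i,j')$ whenever $j>j'$; (4) $(i,j)\equiv(i',j')$ implies $j=j'$; (5) for $j>0$, if $(i,j)\not\equiv(i',j)$ then $(i,j-1)\not\equiv(i',j-1)$. The size of a CR is the number of $\equiv$-equivalence classes of $I$. $P_p(n,\omega^d\cdot k)$ denotes the number of CRs of size $p$ on $\binom{\omega^d\cdot k}{n}$, and $P_p(n,\omega^d)$ means $P_p(n,\omega^d\cdot 1)$ (so all $b_i=0$). *)

(* Defs.v *)
From mathcomp Require Import all_boot.
Set Implicit Arguments. Unset Strict Implicit. Unset Printing Implicit Defensive.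

(* Index set I = {(i,j) : 1 <= i <= n, 0 <= j < d}, with i shifted to 'I_n
   (i.e. 0-based, order preserved). *)
Definition CRidx (n d : nat) : finType := ('I_n * 'I_d)%type.

(* Candidate data: Y : {1..n} -> {0..k-1} and a binary relation (the preorder)
   on the index set, given as a finite boolean function on pairs. *)
Definition CRdata (n d k : nat) : finType :=
  ({ffun 'I_n -> 'I_k} * {ffun (CRidx n d * CRidx n d) -> bool})%type.

Section CR.
Variables (n d k : nat).
Implicit Types (c : CRdata n d k).

Definition crY c : 'I_n -> 'I_k := c.1.
Definition crle c (x y : CRidx n d) : bool := c.2 (x, y).
Definition crequiv c x y := crle c x y && crle c y x.
Definition crlt c x y := crle c x y && ~~ crle c y x.

Definition is_total_preorder c : bool :=
  [forall x, forall y, crle c x y || crle c y x] &&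
  [forall x, forall y, forall z, crle c x y && crle c y z ==> crle c x z].

Definition cond1 c : bool :=
  if 0 < d then
    [forall i : 'I_n, forall i' : 'I_n, forall j : 'I_d,
       (val j == 0) && (i < i') ==> crlt c (i, j) (i', j)]
  else
    [forall i : 'I_n, forall i' : 'I_n, (i < i') ==> (crY c i < crY c i')].

Definition cond2 c : bool :=
  [forall i : 'I_n, forall i' : 'I_n, forall j : 'I_d,
     crequiv c (i, j) (i', j) ==> (crY c i == crY c i')].

Definition cond3 c : bool :=
  [forall i : 'I_n, forall j : 'I_d, forall j' : 'I_d,
     (j' < j) ==> crlt c (i, j) (i, j')].

Definition cond4 c : bool :=
  [forall i : 'I_n, forall i' : 'I_n, forall j : 'I_d, forall j' : 'I_d,
     crequiv c (i, j) (i', j') ==> (j == j')].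

Definition cond5 c : bool :=
  [forall i : 'I_n, forall i' : 'I_n, forall j : 'I_d, forall j' : 'I_d,
     (val j == (val j').+1) && ~~ crequiv c (i, j) (i', j)
       ==> ~~ crequiv c (i, j') (i', j')].

Definition is_CR c : bool :=
  [&& is_total_preorder c, cond1 c, cond2 c, cond3 c, cond4 c & cond5 c].

Definition CRsize c : nat :=
  #|[set [set y | crequiv c x y] | x : CRidx n d]|.

End CR.

(* P_p(n, omega^d * k) *)
Definition Pcount (p n d k : nat) : nat :=
  #|[set c : CRdata n d k | is_CR c & CRsize c == p]|.

Definition P (p n d : nat) : nat := Pcount p n d 1.

(* Main.v *)
Require Import Defs.
From mathcomp Require Import all_boot.
Set Implicit Arguments. Unset Strict Implicit. Unset Printing Implicit Defensive.
Section S.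
Variables (X : finType) (key : X -> nat).
Definition incr n (g : 'I_n -> X) :=
  [forall i : 'I_n, forall i' : 'I_n, (i < i') ==> (key (g i) < key (g i'))].

Lemma incrP n (g : 'I_n -> X) :
  reflect (forall i i' : 'I_n, i < i' -> key (g i) < key (g i')) (incr g).
Proof.
apply: (iffP forallP) => [H i i' lt|H i]; first by move/forallP: (H i) => /(_ i') /implyP; apply.
by apply/forallP => i'; apply/implyP; apply: H.
Qed.
Lemma incr_ex (A : {set X}) : {in A &, injective key} ->
  exists g : {ffun 'I_#|A| -> X}, incr g /\ [set g i | i : 'I_#|A|] = A.
Proof.
move=> kinj.
pose s := sort (fun x y => key x <= key y) (enum A).
have Hs : size s == #|A| by rewrite size_sort cardE.
pose t := Tuple Hs.
have memt x : (x \in t) = (x \in A) by rewrite /= mem_sort mem_enum.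
have us : uniq s by rewrite sort_uniq enum_uniq.
have ss : sorted (fun x y => key x <= key y) s.
  by apply: sort_sorted => x y; apply: leq_total.
have sz : size s = #|A| by apply/eqP.
exists [ffun i => tnth t i]; split.
  apply/incrP => i i' lt; rewrite !ffunE.
  have ti : tnth t i \in A by rewrite -memt mem_tnth.
  have ti' : tnth t i' \in A by rewrite -memt mem_tnth.
  have [x0 _] : X * unit := (tnth t i, tt).
  rewrite ltn_neqAle.
  have -> : key (tnth t i) <= key (tnth t i').
    rewrite !(tnth_nth x0).
    have tr : transitive (fun x y => key x <= key y) by move=> a b c; apply: leq_trans.
    have Hi : (i : nat) \in [pred n | n < size s] by rewrite inE sz ltn_ord.
    have Hi' : (i' : nat) \in [pred n | n < size s] by rewrite inE sz ltn_ord.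
    change (key (nth x0 s i) <= key (nth x0 s i')). exact: (sorted_ltn_nth tr x0 ss _ _ Hi Hi' lt).
  rewrite andbT; apply/negP => /eqP /(kinj _ _ ti ti') /eqP.
  rewrite !(tnth_nth x0) nth_uniq // ?sz ?ltn_ord //.
  by move/eqP/val_inj => e; move: lt; rewrite e ltnn.
apply/setP => x; apply/imsetP/idP => [[i _ ->]|].
  by rewrite ffunE -memt mem_tnth.
by rewrite -memt => /tnthP [i ->]; exists i => //; rewrite ffunE.
Qed.
Lemma incr_inj n (g : 'I_n -> X) : incr g -> injective g.
Proof.
move/incrP=> H i i' E; apply/eqP; rewrite eq_sym; apply/negPn/negP => ne.
case: (ltngtP i i') => [lt|lt|/val_inj e]; last by rewrite e eqxx in ne.
- by have := H _ _ lt; rewrite E ltnn.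
- by have := H _ _ lt; rewrite E ltnn.
Qed.

Lemma sorted_ord n : sorted (fun i j : 'I_n => i < j) (enum 'I_n).
Proof.
have := iota_ltn_sorted 0 n; rewrite -val_enum_ord sorted_map.
by [].
Qed.

Lemma incr_uniq n (g g' : 'I_n -> X) : incr g -> incr g' ->
  [set g i | i : 'I_n] = [set g' i | i : 'I_n] -> g =1 g'.
Proof.
move=> /incrP Hg /incrP Hg' E.
have tr : transitive (fun x y => key x < key y) by move=> a b c; apply: ltn_trans.
have ir : irreflexive (fun x y => key x < key y) by move=> a; apply: ltnn.
have S1 : sorted (fun x y => key x < key y) (map g (enum 'I_n)).
  by apply: homo_sorted (sorted_ord n) => a b; apply: Hg.
have S2 : sorted (fun x y => key x < key y) (map g' (enum 'I_n)).
  by apply: homo_sorted (sorted_ord n) => a b; apply: Hg'.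
have M : map g (enum 'I_n) =i map g' (enum 'I_n).
  move=> x; apply/mapP/mapP => [[i _ ->]|[i _ ->]].
  - have : g i \in [set g' i | i : 'I_n] by rewrite -E imset_f.
    by case/imsetP => j _ ->; exists j; rewrite ?mem_enum.
  - have : g' i \in [set g i | i : 'I_n] by rewrite E imset_f.
    by case/imsetP => j _ ->; exists j; rewrite ?mem_enum.
have := irr_sorted_eq tr ir S1 S2 M => EE i.
have := congr1 (fun s => nth (g i) s i) EE.
rewrite (nth_map i) ?size_enum_ord ?ltn_ord // (nth_map i) ?size_enum_ord ?ltn_ord //.
have -> : nth i (enum 'I_n) i = i by apply: val_inj; rewrite /= nth_enum_ord.
by [].
Qed.
Lemma card_incr (n : nat) (Pr : {set X} -> bool) :
  (forall A, Pr A -> {in A &, injective key}) ->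
  #|[set g : {ffun 'I_n -> X} | incr g && Pr [set g i | i : 'I_n]]| =
  #|[set A : {set X} | (#|A| == n) && Pr A]|.
Proof.
move=> kinj.
set S := [set g : {ffun 'I_n -> X} | _].
have inj : {in S &, injective (fun g : {ffun 'I_n -> X} => [set g i | i : 'I_n])}.
  move=> g g'; rewrite !inE => /andP [ig _] /andP [ig' _] E.
  by apply/ffunP; apply: incr_uniq.
rewrite -(card_in_imset inj).
have -> : (fun g : {ffun 'I_n -> X} => [set g i | i : 'I_n]) @: S = [set A : {set X} | (#|A| == n) && Pr A].
  apply/setP => A; apply/imsetP/idP.
    case=> g; rewrite /S inE => /andP [ig pg] ->; rewrite inE pg andbT.
    by rewrite card_imset ?card_ord //; apply: incr_inj.
  rewrite inE => /andP [/eqP cA PA]; subst n.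
  have [g [ig Eg]] := incr_ex (kinj _ PA).
  by exists g => //; rewrite /S inE ig Eg PA.
by [].
Qed.
End S.
Lemma cnt_lt p (k : nat) : k <= p -> #|[set v : 'I_p | v < k]| = k.
Proof.
move=> kp.
have inj : injective (fun i : 'I_k => widen_ord kp i).
  by move=> a b /(congr1 val) /= /val_inj.
rewrite -[RHS](card_ord k) -(card_imset _ inj).
apply: eq_card => v; rewrite inE; apply/idP/imsetP.
  by move=> lt; exists (Ordinal lt) => //; apply: val_inj.
by case=> i _ ->; rewrite /= ltn_ord.
Qed.

Section StepA.
Variables (n d : nat).
Local Notation T := (CRidx n d).

Definition mkc p (f : {ffun T -> 'I_p}) : CRdata n d 1 :=
  ([ffun _ => ord0], [ffun xy => f xy.1 <= f xy.2]).

Lemma crle_mkc p (f : {ffun T -> 'I_p}) x y : crle (mkc f) x y = (f x <= f y).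
Proof. by rewrite /crle /mkc /= ffunE. Qed.

Lemma crequiv_mkc p (f : {ffun T -> 'I_p}) x y : crequiv (mkc f) x y = (f x == f y).
Proof. by rewrite /crequiv !crle_mkc -eqn_leq. Qed.

Lemma crlt_mkc p (f : {ffun T -> 'I_p}) x y : crlt (mkc f) x y = (f x < f y).
Proof. by rewrite /crlt !crle_mkc -ltnNge; apply/andb_idl => /ltnW. Qed.

Lemma card_Cl p (f : {ffun T -> 'I_p}) (Y : {set T}) :
  #|[set [set z | crequiv (mkc f) y z] | y in Y]| = #|[set f x | x in Y]|.
Proof.
have -> : [set [set z | crequiv (mkc f) y z] | y in Y] =
          [set [set z | v == f z] | v in [set f x | x in Y]].
  rewrite -imset_comp; apply/setP => C; apply/imsetP/imsetP.
    case=> x xY ->; exists x => //; apply/setP => y.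
    by rewrite !inE crequiv_mkc.
  case=> x xY ->; exists x => //; apply/setP => y.
  by rewrite !inE crequiv_mkc.
apply: card_in_imset => v w /imsetP [x _ ->] /imsetP [y _ ->] E.
have : y \in [set y0 | f x == f y0] by rewrite E inE.
by rewrite inE => /eqP.
Qed.

Lemma size_mkc p (f : {ffun T -> 'I_p}) : CRsize (mkc f) = #|[set f x | x in [set: T]]|.
Proof.
rewrite /CRsize -card_Cl; apply: eq_card => C.
apply/imsetP/imsetP => [][x _ ->]; by exists x.
Qed.

Section Rank.
Variable c : CRdata n d 1.
Hypothesis tot : forall x y, crle c x y || crle c y x.
Hypothesis trans : forall x y z, crle c x y -> crle c y z -> crle c x z.
Definition Cl (y : T) := [set z | crequiv c y z].
Definition rank (x : T) := #|[set Cl y | y in [set y | crlt c y x]]|.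

Lemma le_refl x : crle c x x.
Proof. by have := tot x x; rewrite orbb. Qed.

Lemma Cl_notin x : Cl x \notin [set Cl y | y in [set y | crlt c y x]].
Proof.
apply/imsetP => [[z]]; rewrite inE /crlt => /andP [_ nzx] E.
have : z \in Cl z by rewrite inE /crequiv le_refl.
by rewrite -E inE /crequiv => /andP [xz zx]; rewrite xz in nzx.
Qed.

Lemma lt_sub x y : crle c x y ->
  [set y' | crlt c y' x] \subset [set y' | crlt c y' y].
Proof.
move=> xy; apply/subsetP => z; rewrite !inE /crlt => /andP [zx nxz].
rewrite (trans zx xy) /=; apply/negP => yz.
by rewrite (trans xy yz) in nxz.
Qed.

Lemma rank_le x y : crle c x y = (rank x <= rank y).
Proof.
apply/idP/idP => [xy|].
  by apply: subset_leq_card; apply: imsetS; apply: lt_sub.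
apply: contraTT => nxy.
have yx : crle c y x by have := tot x y; rewrite (negbTE nxy).
rewrite -ltnNge; apply: proper_card; apply/properP; split.
  by apply: imsetS; apply: lt_sub.
exists (Cl y); last by apply: Cl_notin.
by apply: imset_f; rewrite inE /crlt yx.
Qed.

Lemma rank_lt x : rank x < CRsize c.
Proof.
rewrite /CRsize; apply: proper_card; apply/properP; split.
  by apply/subsetP => C /imsetP [y _ ->]; apply: imset_f.
by exists (Cl x); [apply: imset_f | apply: Cl_notin].
Qed.
End Rank.

Lemma stepA p : Pcount p n d 1 =
  #|[set f : {ffun T -> 'I_p} | ([set f x | x in [set: T]] == [set: 'I_p]) && is_CR (mkc f)]|.
Proof.
set S := [set f : {ffun T -> 'I_p} | _].
have frank (f : {ffun T -> 'I_p}) x : f \in S -> f x = rank (mkc f) x :> nat.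
  rewrite /S inE => /andP [/eqP sf _].
  have fxp : f x <= p by apply: ltnW; apply: ltn_ord.
  rewrite /rank /Cl card_Cl.
  transitivity #|[set v : 'I_p | v < f x]|; first by rewrite cnt_lt.
  apply: eq_card => v; rewrite inE; apply/idP/imsetP.
    have : v \in [set f x | x in [set: T]] by rewrite sf inE.
    by case/imsetP => y _ -> lt; exists y => //; rewrite inE crlt_mkc.
  by case=> y; rewrite inE crlt_mkc => lt ->.
have inj : {in S &, injective (@mkc p)}.
  move=> f g fS gS E; apply/ffunP => x; apply: val_inj.
  by rewrite /= (frank f x fS) (frank g x gS) E.
rewrite -(card_in_imset inj); apply: eq_card => c; rewrite inE.
apply/idP/imsetP; last first.
  case=> f; rewrite /S inE => /andP [/eqP sf cf] ->.
  by rewrite cf size_mkc sf cardsT card_ord eqxx.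
case/andP => cc /eqP sz.
have /andP [tp _] := cc.
have tot : forall x y, crle c x y || crle c y x.
  by move: tp => /andP [/forallP H _] x y; move/forallP: (H x) => /(_ y).
have trans : forall x y z, crle c x y -> crle c y z -> crle c x z.
  move=> x y z xy yz; move: tp => /andP [_ /forallP H].
  by have /forallP /(_ y) /forallP /(_ z) /implyP := H x; apply; rewrite xy yz.
have rl x : rank c x < p by rewrite -sz; apply: rank_lt.
pose f : {ffun T -> 'I_p} := [ffun x => Ordinal (rl x)].
have E : mkc f = c.
  have E1 : [ffun _ => ord0] = c.1.
    by apply/ffunP => i; rewrite ffunE; apply/val_inj; case: (c.1 i) => [[|]].
  have E2 : [ffun xy => f xy.1 <= f xy.2] = c.2.
    apply/ffunP => [[x y]]; rewrite !ffunE /=.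
    by rewrite -[c.2 (x,y)]/(crle c x y) (rank_le tot trans).
  by rewrite /mkc E1 E2 -surjective_pairing.
exists f => //; rewrite /S inE E cc andbT.
by rewrite eqEcard subsetT /= cardsT card_ord -size_mkc E sz.
Qed.
End StepA.
Section Tup.
Variables (d p : nat).
Definition tup := {ffun 'I_d -> 'I_p}.

Definition tconds (A : {set tup}) : bool :=
  [&& [forall x in A, forall j : 'I_d, forall j' : 'I_d, (j' < j) ==> (x j < x j')],
      [forall x in A, forall y in A, forall j : 'I_d, forall j' : 'I_d, (x j == y j') ==> (j == j')],
      [forall x in A, forall y in A, forall j : 'I_d, ((val j == 0) && (x j == y j)) ==> (x == y)] &
      [forall x in A, forall y in A, forall j : 'I_d, forall j' : 'I_d,
          ((val j == (val j').+1) && (x j' == y j')) ==> (x j == y j)]].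

Definition T1 (A : {set tup}) := forall x, x \in A -> forall j j' : 'I_d, j' < j -> x j < x j'.
Definition T2 (A : {set tup}) := forall x y, x \in A -> y \in A -> forall j j' : 'I_d, x j = y j' -> j = j'.
Definition T3 (A : {set tup}) := forall x y, x \in A -> y \in A -> forall j : 'I_d, val j = 0 -> x j = y j -> x = y.
Definition T4 (A : {set tup}) := forall x y, x \in A -> y \in A -> forall j j' : 'I_d,
   val j = (val j').+1 -> x j' = y j' -> x j = y j.

Lemma tcondsP A : reflect (T1 A /\ T2 A /\ T3 A /\ T4 A) (tconds A).
Proof.
apply: (iffP and4P) => [[H1 H2 H3 H4]|[H1 [H2 [H3 H4]]]].
  split.
    move=> x xA j j' lt; move/forall_inP: H1 => /(_ x xA) /forallP /(_ j) /forallP /(_ j') /implyP.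
    by apply.
  split.
    move=> x y xA yA j j' E; move/forall_inP: H2 => /(_ x xA) /forall_inP /(_ y yA).
    by move=> /forallP /(_ j) /forallP /(_ j') /implyP /(_ (introT eqP E)) /eqP.
  split.
    move=> x y xA yA j j0 E; move/forall_inP: H3 => /(_ x xA) /forall_inP /(_ y yA).
    by move=> /forallP /(_ j) /implyP; rewrite j0 E !eqxx => /(_ isT) /eqP.
  move=> x y xA yA j j' e E; move/forall_inP: H4 => /(_ x xA) /forall_inP /(_ y yA).
  by move=> /forallP /(_ j) /forallP /(_ j') /implyP; rewrite e E !eqxx => /(_ isT) /eqP.
split.
- apply/forall_inP => x xA; apply/forallP => j; apply/forallP => j'; apply/implyP.
  exact: H1.
- apply/forall_inP => x xA; apply/forall_inP => y yA; apply/forallP => j; apply/forallP => j'.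
  by apply/implyP => /eqP E; apply/eqP; apply: H2 E.
- apply/forall_inP => x xA; apply/forall_inP => y yA; apply/forallP => j.
  by apply/implyP => /andP [/eqP j0 /eqP E]; apply/eqP; apply: H3 E.
- apply/forall_inP => x xA; apply/forall_inP => y yA; apply/forallP => j; apply/forallP => j'.
  by apply/implyP => /andP [/eqP e /eqP E]; apply/eqP; apply: H4 E.
Qed.

Definition vals (A : {set tup}) : {set 'I_p} :=
  [set v : 'I_p | [exists x in A, exists j : 'I_d, x j == v]].

Lemma valsP (A : {set tup}) (v : 'I_p) : reflect (exists x j, x \in A /\ x j = v) (v \in vals A).
Proof.
rewrite inE; apply: (iffP existsP) => [[x /andP [xA /existsP [j /eqP E]]]|[x [j [xA E]]]].
  by exists x, j.
by exists x; rewrite xA /=; apply/existsP; exists j; rewrite E.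
Qed.

Definition Cnt n (V : {set 'I_p}) :=
  #|[set A : {set tup} | [&& tconds A, vals A == V & #|A| == n]]|.

End Tup.
Section Relabel.
Variables (d q p : nat) (h : 'I_q -> 'I_p).
Hypothesis hmono : forall a b : 'I_q, a < b -> h a < h b.

Lemma hlt a b : (h a < h b) = (a < b).
Proof.
case: (ltngtP a b) => [/hmono -> //|/hmono lt|/val_inj ->]; last by rewrite ltnn.
by apply/negbTE; rewrite -leqNgt ltnW.
Qed.

Lemma hinj : injective h.
Proof.
move=> a b E; apply: val_inj.
by case: (ltngtP a b) => [lt|lt|//]; have := hmono lt; rewrite E ltnn.
Qed.

Definition hx (x : tup d q) : tup d p := [ffun j => h (x j)].
Lemma hx_inj : injective hx.
Proof.
move=> x y E; apply/ffunP => j; apply: hinj.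
by have := congr1 (fun z : tup d p => z j) E; rewrite !ffunE.
Qed.

Definition Hs (A : {set tup d q}) := [set hx x | x in A].

Lemma tconds_H A : tconds (Hs A) = tconds A.
Proof.
apply/tcondsP/tcondsP => [[H1 [H2 [H3 H4]]]|[H1 [H2 [H3 H4]]]].
  have mA x : x \in A -> hx x \in Hs A by move=> xA; apply: imset_f.
  split.
    by move=> x xA j j' lt; have := H1 _ (mA _ xA) _ _ lt; rewrite !ffunE hlt.
  split.
    by move=> x y xA yA j j' E; apply: (H2 _ _ (mA _ xA) (mA _ yA)); rewrite !ffunE E.
  split.
    by move=> x y xA yA j j0 E; apply: hx_inj; apply: (H3 _ _ (mA _ xA) (mA _ yA) j j0); rewrite !ffunE E.
  move=> x y xA yA j j' e E; apply: hinj.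
  by have := H4 _ _ (mA _ xA) (mA _ yA) _ _ e; rewrite !ffunE E => /(_ erefl).
split.
  by move=> ? /imsetP [x xA ->] j j' lt; rewrite !ffunE hlt; apply: H1.
split.
  by move=> ? ? /imsetP [x xA ->] /imsetP [y yA ->] j j'; rewrite !ffunE => /hinj; apply: H2.
split.
  move=> ? ? /imsetP [x xA ->] /imsetP [y yA ->] j j0; rewrite !ffunE => /hinj E.
  by rewrite (H3 _ _ xA yA j j0 E).
move=> ? ? /imsetP [x xA ->] /imsetP [y yA ->] j j' e; rewrite !ffunE => /hinj E.
by rewrite (H4 _ _ xA yA _ _ e E).
Qed.

Lemma vals_H A : vals (Hs A) = [set h v | v in vals A].
Proof.
apply/setP => w; apply/valsP/imsetP.
  case=> ? [j [/imsetP [x xA ->] <-]]; exists (x j); last by rewrite ffunE.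
  by apply/valsP; exists x, j.
case=> v /valsP [x [j [xA <-]]] ->; exists (hx x), j; split; first by apply: imset_f.
by rewrite ffunE.
Qed.

Lemma relabel n (V : {set 'I_q}) : Cnt d n V = Cnt d n [set h v | v in V].
Proof.
rewrite /Cnt -(card_imset _ (imset_inj hx_inj)); apply: eq_card => B.
rewrite inE; apply/imsetP/idP.
  case=> A; rewrite inE => /and3P [tA /eqP vA /eqP cA] ->.
  rewrite -/(Hs A) tconds_H tA vals_H vA eqxx /=.
  by rewrite card_imset ?cA //; apply: hx_inj.
case/and3P => tB /eqP vB /eqP cB.
have HB : B = Hs [set x | hx x \in B].
  apply/setP => y; apply/idP/imsetP => [yB|[x]]; last by rewrite inE => ? ->.
  have Hj j : exists a, h a == y j.
    have : y j \in vals B by apply/valsP; exists y, j.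
    by rewrite vB => /imsetP [a _ ->]; exists a.
  exists [ffun j => sval (sigW (Hj j))]; last first.
    by apply/ffunP => j; rewrite !ffunE; case: (sigW (Hj j)) => a /= /eqP.
  rewrite inE; suff -> : hx [ffun j => sval (sigW (Hj j))] = y by [].
  by apply/ffunP => j; rewrite !ffunE; case: (sigW (Hj j)) => a /= /eqP.
exists [set x | hx x \in B] => //.
rewrite inE -tconds_H -HB tB /=.
apply/andP; split.
  by rewrite -(inj_eq (imset_inj hinj)) -vals_H -HB vB.
by rewrite -(card_imset _ hx_inj) -/(Hs _) -HB cB.
Qed.
End Relabel.
Lemma card_bij (aT bT : finType) (h : aT -> bT) (h' : bT -> aT) (P : pred bT) :
  cancel h h' -> cancel h' h -> #|[set a | P (h a)]| = #|[set b | P b]|.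
Proof.
move=> hK h'K; rewrite -(card_imset _ (can_inj hK)); apply: eq_card => b.
rewrite inE; apply/imsetP/idP => [[a]|Pb]; first by rewrite inE => Pa ->.
by exists (h' b); rewrite ?inE h'K.
Qed.

Section StepB.
Variables (n d' p : nat).
Local Notation d := d'.+1.
Local Notation T := (CRidx n d).
Definition cur (f : {ffun T -> 'I_p}) : {ffun 'I_n -> tup d p} :=
  [ffun i => [ffun j => f (i, j)]].
Definition unc (g : {ffun 'I_n -> tup d p}) : {ffun T -> 'I_p} := [ffun ij => g ij.1 ij.2].
Lemma curK : cancel cur unc.
Proof. by move=> f; apply/ffunP => [[i j]]; rewrite !ffunE. Qed.
Lemma uncK : cancel unc cur.
Proof. by move=> g; apply/ffunP => i; apply/ffunP => j; rewrite !ffunE. Qed.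
Definition key (x : tup d p) : nat := x ord0.

Lemma surj_cur (f : {ffun T -> 'I_p}) :
  [set f x | x in [set: T]] = vals [set cur f i | i : 'I_n].
Proof.
apply/setP => v; apply/imsetP/valsP => [[[i j] _ ->]|[x [j [/imsetP [i _ ->] <-]]]].
  by exists (cur f i), j; rewrite imset_f // ffunE ffunE.
by exists (i, j) => //; rewrite !ffunE.
Qed.

Lemma isCR_cur (f : {ffun T -> 'I_p}) :
  is_CR (mkc f) = incr key (cur f) && tconds [set cur f i | i : 'I_n].
Proof.
rewrite /is_CR.
have -> : is_total_preorder (mkc f) = true.
  apply/andP; split; apply/forallP => x; apply/forallP => y.
    by rewrite !crle_mkc leq_total.
  by apply/forallP => z; apply/implyP; rewrite !crle_mkc => /andP [a b]; apply: leq_trans a b.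
have -> : cond2 (mkc f) = true.
  apply/forallP => i; apply/forallP => i'; apply/forallP => j; apply/implyP => _.
  by rewrite /crY /mkc /= !ffunE.
rewrite /cond1 /= /cond3 /cond4 /cond5.
apply/idP/idP.
  case/and4P => c1 c3 c4 c5.
  have C1 (i i' : 'I_n) (j : 'I_d) : val j = 0 -> i < i' -> f (i, j) < f (i', j).
    move=> j0 lt; move/forallP: c1 => /(_ i) /forallP /(_ i') /forallP /(_ j) /implyP.
    by rewrite j0 lt crlt_mkc; apply.
  apply/andP; split.
    by apply/incrP => i i' lt; rewrite /key !ffunE; apply: C1.
  apply/tcondsP; split.
    move=> x /imsetP [i _ ->] j j' lt; rewrite !ffunE.
    move/forallP: c3 => /(_ i) /forallP /(_ j) /forallP /(_ j') /implyP.
    by rewrite lt crlt_mkc; apply.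
  split.
    move=> x y /imsetP [i _ ->] /imsetP [i' _ ->] j j'; rewrite !ffunE => E.
    move/forallP: c4 => /(_ i) /forallP /(_ i') /forallP /(_ j) /forallP /(_ j') /implyP.
    by rewrite crequiv_mkc E eqxx => /(_ isT) /eqP.
  split.
    move=> x y /imsetP [i _ ->] /imsetP [i' _ ->] j j0; rewrite !ffunE => E.
    case: (ltngtP i i') => [lt|lt|/val_inj -> //].
      by have := C1 _ _ _ j0 lt; rewrite E ltnn.
    by have := C1 _ _ _ j0 lt; rewrite E ltnn.
  move=> x y /imsetP [i _ ->] /imsetP [i' _ ->] j j' e; rewrite !ffunE => E.
  move/forallP: c5 => /(_ i) /forallP /(_ i') /forallP /(_ j) /forallP /(_ j') /implyP.
  rewrite !crequiv_mkc e eqxx E eqxx /= => H; apply/eqP; apply/negPn/negP => ne.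
  by move: (H ne).
case/andP => /incrP ic /tcondsP [H1 [H2 [H3 H4]]].
have mi i : cur f i \in [set cur f i | i : 'I_n] by apply: imset_f.
apply/and4P; split.
- apply/forallP => i; apply/forallP => i'; apply/forallP => j; apply/implyP.
  case/andP => /eqP j0 lt; rewrite crlt_mkc.
  have -> : j = ord0 by apply: val_inj.
  by have := ic _ _ lt; rewrite /key !ffunE.
- apply/forallP => i; apply/forallP => j; apply/forallP => j'; apply/implyP => lt.
  rewrite crlt_mkc; have := H1 _ (mi i) _ _ lt.
  by rewrite !ffunE.
- apply/forallP => i; apply/forallP => i'; apply/forallP => j; apply/forallP => j'.
  apply/implyP; rewrite crequiv_mkc => /eqP E; apply/eqP.
  by apply: (H2 _ _ (mi i) (mi i')); rewrite !ffunE.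
- apply/forallP => i; apply/forallP => i'; apply/forallP => j; apply/forallP => j'.
  apply/implyP; rewrite !crequiv_mkc => /andP [/eqP e ne]; apply/negP => /eqP E.
  move/negP: ne; apply; apply/eqP.
  have := H4 _ _ (mi i) (mi i') _ _ e.
  by rewrite !ffunE; apply.
Qed.

Lemma stepB : #|[set f : {ffun T -> 'I_p} |
     ([set f x | x in [set: T]] == [set: 'I_p]) && is_CR (mkc f)]| = @Cnt d p n [set: 'I_p].
Proof.
pose P := (fun g : {ffun 'I_n -> tup d p} => incr key g && (tconds [set g i | i : 'I_n] && (vals [set g i | i : 'I_n] == [set: 'I_p]))).
have -> : [set f : {ffun T -> 'I_p} | ([set f x | x in [set: T]] == [set: 'I_p]) && is_CR (mkc f)]
   = [set f | P (cur f)].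
  apply/setP => f; rewrite !inE /P surj_cur isCR_cur.
  by rewrite andbC -andbA; congr (_ && _); rewrite andbC.
rewrite (card_bij P curK uncK) /P.
rewrite (@card_incr _ key n (fun A => tconds A && (vals A == [set: 'I_p]))).
  apply: eq_card => A; rewrite !inE.
  by rewrite andbC -andbA.
move=> A /andP [/tcondsP [_ [_ [H3 _]]] _] x y xA yA E.
by apply: (H3 _ _ xA yA ord0) => //; apply: val_inj.
Qed.
End StepB.

Lemma tconds_sub d p (A A' : {set tup d p}) : A' \subset A -> tconds A -> tconds A'.
Proof.
move=> /subsetP s /tcondsP [H1 [H2 [H3 H4]]]; apply/tcondsP; split.
  by move=> x /s; apply: H1.
split; first by move=> x y /s xA /s yA; apply: H2.
split; first by move=> x y /s xA /s yA; apply: H3.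
by move=> x y /s xA /s yA; apply: H4.
Qed.

Section Decomp.
Variables (d' p' : nat).
Hypothesis d'pos : 0 < d'.
Local Notation d := d'.+1.
Local Notation p := p'.+1.
Local Notation tD := (tup d p).
Local Notation tE := (tup d' p).

Definition restr (x : tD) : tE := [ffun j => x (lift ord_max j)].
Definition ext (y : tE) : tD :=
  [ffun j => if unlift ord_max j is Some j' then y j' else ord0].

Lemma ext_max (y : tE) : ext y ord_max = ord0.
Proof. by rewrite ffunE unlift_none. Qed.
Lemma ext_lift (y : tE) (a : 'I_d') : ext y (lift ord_max a) = y a.
Proof. by rewrite ffunE liftK. Qed.
Lemma restrK : cancel ext restr.
Proof. by move=> y; apply/ffunP => a; rewrite ffunE ext_lift. Qed.
Lemma extK (x : tD) : x ord_max = ord0 -> ext (restr x) = x.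
Proof.
move=> x0; apply/ffunP => j; case: (unliftP ord_max j) => [a|] ->.
  by rewrite ext_lift ffunE.
by rewrite ext_max.
Qed.
Lemma ext_inj : injective ext.
Proof. exact: can_inj restrK. Qed.

Lemma nmax_lt (j : 'I_d) : j != ord_max -> j < d'.
Proof.
move=> ne; have := ltn_ord j; rewrite ltnS leq_eqVlt => /orP [/eqP e|//].
by case/eqP: ne; apply: val_inj.
Qed.

Lemma val_lift (a : 'I_d') : val (lift ord_max a) = val a.
Proof. by rewrite /= /bump leqNgt ltn_ord. Qed.

Section Facts.
Variable A : {set tD}.
Hypothesis tA : tconds A.

Lemma F1 (x : tD) (j : 'I_d) : x \in A -> j != ord_max -> x ord_max < x j.
Proof.
move: tA => /tcondsP [H1 _] xA ne; apply: H1 => //.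
by rewrite /= nmax_lt.
Qed.

Lemma F2 (x : tD) (j : 'I_d) : x \in A -> x j = ord0 -> j = ord_max.
Proof.
move=> xA x0; apply/eqP; apply/negPn/negP => ne.
by have := F1 xA ne; rewrite x0.
Qed.

Lemma F3 (x y : tD) (j : 'I_d) : x \in A -> y \in A -> x j = y j -> x ord_max = y ord_max.
Proof.
move: tA => /tcondsP [_ [_ [_ H4]]] xA yA.
suff H k : forall j : 'I_d, val j + k = d' -> x j = y j -> x ord_max = y ord_max.
  by apply: (H (d' - j)); rewrite subnKC // -ltnS ltn_ord.
elim: k => [|k IH] {}j.
  by rewrite addn0 => e; have -> : j = ord_max by apply: val_inj.
rewrite addnS => e E.
have lt : (val j).+1 < d by rewrite ltnS; apply: (leq_trans _ (eq_leq e)); rewrite ltnS leq_addr.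
apply: (IH (Ordinal lt)); first by rewrite /= addSn.
by apply: H4 => //.
Qed.

Lemma F4 (x y : tD) (j j' : 'I_d) : x \in A -> y \in A -> x j = y j' -> x ord_max = y ord_max.
Proof.
move: (tA) => /tcondsP [_ [H2 _]] xA yA E.
have e := H2 _ _ xA yA _ _ E; subst j'.
exact: F3 xA yA E.
Qed.
End Facts.

Definition S (A : {set tD}) := [set x in A | x ord_max == ord0].
Definition G1 (A : {set tD}) : {set tE} := [set restr x | x in S A].
Definition G2 (A : {set tD}) := A :\: S A.
Definition F (BC : {set tE} * {set tD}) : {set tD} := [set ext y | y in BC.1] :|: BC.2.

Lemma S_sub A : S A \subset A.
Proof. by apply/subsetP => x; rewrite inE => /andP []. Qed.

Section Fiber.
Variables (n k : nat) (B0 : {set 'I_p'}).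
Hypotheses (k0 : 0 < k) (kn : k <= n).
Definition V1 : {set 'I_p} := [set lift ord0 v | v in B0].
Definition W : {set 'I_p} := [set lift ord0 v | v in ~: B0].

Lemma Wchar (v : 'I_p) : (v \in W) = (v != ord0) && (v \notin V1).
Proof.
case: (unliftP ord0 v) => [w|] ->.
  rewrite /W /V1 !mem_imset ?inE; try by apply: lift_inj.
  by rewrite eq_sym neq_lift.
rewrite eqxx /=; apply/negbTE/negP => /imsetP [w _ e].
by have := neq_lift ord0 w; rewrite -e eqxx.
Qed.

Lemma V1nz (v : 'I_p) : v \in V1 -> v != ord0.
Proof. by case/imsetP => w _ ->; rewrite eq_sym neq_lift. Qed.

Definition Fib := [set A : {set tD} |
  [&& tconds A, vals A == [set: 'I_p], #|A| == n, vals (G1 A) == V1 & #|S A| == k]].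
Definition Prd := setX [set B : {set tE} | [&& tconds B, vals B == V1 & #|B| == k]]
                       [set C : {set tD} | [&& tconds C, vals C == W & #|C| == n - k]].

Lemma G_prd A : A \in Fib -> (G1 A, G2 A) \in Prd.
Proof.
rewrite inE => /and5P [tA /eqP vA /eqP cA /eqP v1 /eqP cS].
have /tcondsP [H1 [H2 [H3 H4]]] := tA.
have SA x : x \in S A -> x \in A /\ x ord_max = ord0 by rewrite inE => /andP [? /eqP].
rewrite in_setX; apply/andP; split; rewrite inE; apply/and3P; split.
- apply/tcondsP; split.
    move=> ? /imsetP [x xS ->] a b lt; rewrite !ffunE; apply: H1 (SA x xS).1 _ _ _.
    by rewrite !val_lift.
  split.
    move=> ? ? /imsetP [x xS ->] /imsetP [y yS ->] a b; rewrite !ffunE => E.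
    by have := H2 _ _ (SA x xS).1 (SA y yS).1 _ _ E; move/lift_inj.
  split.
    move=> ? ? /imsetP [x xS ->] /imsetP [y yS ->] a a0; rewrite !ffunE => E.
    suff -> : x = y by [].
    by apply: (H3 _ _ (SA x xS).1 (SA y yS).1 (lift ord_max a)); rewrite ?val_lift.
  move=> ? ? /imsetP [x xS ->] /imsetP [y yS ->] a b e; rewrite !ffunE => E.
  by apply: (H4 _ _ (SA x xS).1 (SA y yS).1 _ (lift ord_max b)); rewrite ?val_lift.
- by rewrite v1.
- rewrite card_in_imset ?cS // => x y xS yS E.
  by rewrite -(extK (SA x xS).2) -(extK (SA y yS).2) E.
- exact: tconds_sub (subsetDl A (S A)) tA.
- apply/eqP/setP => v; rewrite Wchar; apply/valsP/andP.
    case=> x [j [xG E]]; move: xG; rewrite in_setD => /andP [xnS xA].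
    have xm : x ord_max != ord0 by move: xnS; rewrite inE xA.
    split.
      apply/eqP => v0; subst v.
      have jm := F2 tA xA v0; subst j; by rewrite v0 eqxx in xm.
    apply/negP; rewrite -v1 => /valsP [y [a [/imsetP [z zS ->] E']]].
    rewrite ffunE in E'; rewrite -E' in E.
    have := F4 tA xA (SA z zS).1 E; rewrite (SA z zS).2 => e.
    by rewrite e eqxx in xm.
  case=> vn0 vnV1.
  have : v \in vals A by rewrite vA inE.
  case/valsP => x [j [xA E]]; exists x, j; split => //.
  rewrite in_setD xA andbT inE xA /=; apply/eqP => xm0.
  case: (unliftP ord_max j) E => [a ->|->] E.
    move/negP: vnV1; apply; rewrite -v1; apply/valsP; exists (restr x), a; split.
      by apply: imset_f; rewrite inE xA xm0 eqxx.
    by rewrite ffunE.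
  by rewrite -E xm0 eqxx in vn0.
- have := cardsID (S A) A; rewrite (setIidPr (S_sub A)) cS cA => e.
  by apply/eqP; rewrite -e addKn.
Qed.

Lemma FG A : A \in Fib -> F (G1 A, G2 A) = A.
Proof.
move=> _; rewrite /F /= /G1 -imset_comp.
have -> : [set (ext \o restr) x | x in S A] = S A.
  apply/setP => x; apply/imsetP/idP => [[y yS ->]|xS].
    by rewrite /= extK //; move: yS; rewrite inE => /andP [_ /eqP].
  by exists x => //=; rewrite extK //; move: xS; rewrite inE => /andP [_ /eqP].
by rewrite /G2 -{1}(setIidPr (S_sub A)) setID.
Qed.

Section PF.
Variables (B : {set tE}) (C : {set tD}).
Hypotheses (tB : tconds B) (vB : vals B = V1) (cB : #|B| = k)
           (tC : tconds C) (vC : vals C = W) (cC : #|C| = n - k).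

Lemma CW (z : tD) j : z \in C -> z j \in W.
Proof. by move=> zC; rewrite -vC; apply/valsP; exists z, j. Qed.
Lemma BV (y : tE) a : y \in B -> y a \in V1.
Proof. by move=> yB; rewrite -vB; apply/valsP; exists y, a. Qed.
Lemma Cnz (z : tD) j : z \in C -> z j != ord0.
Proof. by move/(CW j); rewrite Wchar => /andP []. Qed.
Lemma CnV (z : tD) j : z \in C -> z j \notin V1.
Proof. by move/(CW j); rewrite Wchar => /andP []. Qed.
Lemma extv (y : tE) j : y \in B -> ext y j = ord0 \/ ext y j \in V1.
Proof.
move=> yB; case: (unliftP ord_max j) => [a ->|->].
  by right; rewrite ext_lift; apply: BV.
by left; rewrite ext_max.
Qed.
Lemma disj (y : tE) (z : tD) j j' : y \in B -> z \in C -> ext y j != z j'.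
Proof.
move=> yB zC; case: (extv j yB) => [->|H]; first by rewrite eq_sym Cnz.
by apply/eqP => E; move: (CnV j' zC); rewrite -E H.
Qed.

Lemma caseF x : x \in F (B, C) -> (exists2 y, y \in B & x = ext y) \/ x \in C.
Proof. by rewrite inE => /orP [/imsetP [y yB ->]|xC]; [left; exists y | right]. Qed.

Lemma SF : S (F (B, C)) = [set ext y | y in B].
Proof.
apply/setP => x; rewrite inE; apply/andP/idP.
  case=> /caseF [[y yB ->]|xC] x0; first by apply: imset_f.
  by move: (Cnz ord_max xC); rewrite x0.
case/imsetP => y yB ->; split; last by rewrite ext_max.
by rewrite inE; apply/orP; left; apply: imset_f.
Qed.

Lemma G1F : G1 (F (B, C)) = B.
Proof.
rewrite /G1 SF -imset_comp; apply/setP => y; apply/imsetP/idP.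
  by case=> z zB ->; rewrite /= restrK.
by move=> yB; exists y => //=; rewrite restrK.
Qed.

Lemma G2F : G2 (F (B, C)) = C.
Proof.
rewrite /G2 SF; apply/setP => x; rewrite in_setD inE.
case: (boolP (x \in C)) => xC; last by rewrite orbF andNb.
rewrite orbT andbT; apply/imsetP => [[y yB e]].
by move: (disj ord_max ord_max yB xC); rewrite e eqxx.
Qed.

Lemma tconds_F : tconds (F (B, C)).
Proof.
have /tcondsP [H1 [H2 [H3 H4]]] := tB.
have /tcondsP [K1 [K2 [K3 K4]]] := tC.
apply/tcondsP; split.
  move=> x /caseF [[y yB ->]|xC] j j' lt; last by apply: K1.
  case: (unliftP ord_max j') lt => [b ->|->] lt; last first.
    by move: lt; rewrite ltnNge -ltnS ltn_ord.
  rewrite ext_lift; case: (unliftP ord_max j) lt => [a ->|->] lt.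
    by rewrite ext_lift; apply: H1 => //; move: lt; rewrite !val_lift.
  rewrite ext_max lt0n; move: (V1nz (BV b yB)); apply: contra => /eqP e.
  by apply/eqP; apply: val_inj.
split.
  move=> x x' /caseF [[y yB ->]|xC] /caseF [[y' yB' ->]|xC'] j j' E.
  - case: (unliftP ord_max j) E => [a ->|->] E;
      case: (unliftP ord_max j') E => [b ->|->] E //.
    + by rewrite !ext_lift in E; rewrite (H2 _ _ yB yB' _ _ E).
    + by rewrite ext_lift ext_max in E; move: (V1nz (BV a yB)); rewrite E eqxx.
    + by rewrite ext_lift ext_max in E; move: (V1nz (BV b yB')); rewrite E eqxx.
  - by move: (disj j j' yB xC'); rewrite E eqxx.
  - by move: (disj j' j yB' xC); rewrite E eqxx.
  - exact: K2 E.
split.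
  move=> x x' /caseF [[y yB ->]|xC] /caseF [[y' yB' ->]|xC'] j j0 E.
  - case: (unliftP ord_max j) E j0 => [a ->|->] E j0; last first.
      by move: d'pos; rewrite -j0 ltnn.
    rewrite !ext_lift in E; rewrite val_lift in j0.
    by rewrite (H3 _ _ yB yB' _ j0 E).
  - by move: (disj j j yB xC'); rewrite E eqxx.
  - by move: (disj j j yB' xC); rewrite E eqxx.
  - exact: K3 E.
move=> x x' /caseF [[y yB ->]|xC] /caseF [[y' yB' ->]|xC'] j j' e E.
- case: (unliftP ord_max j') e E => [b ->|->] e E; last first.
    by move: (ltn_ord j); rewrite e ltnn.
  rewrite !ext_lift in E.
  case: (unliftP ord_max j) e => [a ->|->] e; last by rewrite !ext_max.
  rewrite !ext_lift; apply: (H4 _ _ yB yB' _ b) => //.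
  by move: e; rewrite !val_lift.
- by move: (disj j' j' yB xC'); rewrite E eqxx.
- by move: (disj j' j' yB' xC); rewrite E eqxx.
- exact: K4 e E.
Qed.

Lemma vals_F : vals (F (B, C)) = [set: 'I_p].
Proof.
apply/setP => v; rewrite in_setT; apply/valsP.
case: (v =P ord0) => [->|vn0].
  have : B != set0 by rewrite -card_gt0 cB.
  case/set0Pn => y yB; exists (ext y), ord_max; split; last by rewrite ext_max.
  by rewrite inE; apply/orP; left; apply: imset_f.
case: (boolP (v \in V1)) => vV.
  rewrite -vB in vV; case/valsP: vV => y [a [yB E]].
  exists (ext y), (lift ord_max a); rewrite ext_lift; split => //.
  by rewrite inE; apply/orP; left; apply: imset_f.
have : v \in W by rewrite Wchar vV andbT; apply/eqP.
rewrite -vC => /valsP [z [j [zC E]]]; exists z, j; split => //.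
by rewrite inE zC orbT.
Qed.

Lemma card_F : #|F (B, C)| = n.
Proof.
rewrite /F cardsU /=.
have -> : [set ext y | y in B] :&: C = set0.
  apply/setP => x; rewrite !inE; apply/andP => [[/imsetP [y yB ->] xC]].
  by move: (disj ord_max ord_max yB xC); rewrite eqxx.
by rewrite cards0 subn0 card_imset ?cB ?cC ?subnKC //; apply: ext_inj.
Qed.
End PF.

Lemma F_fib BC : BC \in Prd -> F BC \in Fib.
Proof.
case: BC => B C; rewrite in_setX !inE => /andP [/and3P [tB /eqP vB /eqP cB] /and3P [tC /eqP vC /eqP cC]].
rewrite tconds_F // vals_F // card_F // G1F // SF // vB card_imset ?cB ?eqxx //.
exact: ext_inj.
Qed.

Lemma GF : {in Prd, cancel F (fun A => (G1 A, G2 A))}.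
Proof.
case=> B C; rewrite in_setX !inE => /andP [/and3P [tB /eqP vB /eqP cB] /and3P [tC /eqP vC /eqP cC]].
by rewrite G1F // G2F.
Qed.

Lemma card_fib : #|Fib| = Cnt d' k V1 * Cnt d (n - k) W.
Proof.
have -> : Fib = F @: Prd.
  apply/setP => A; apply/idP/imsetP => [HA|[BC HBC ->]]; last exact: F_fib.
  by exists (G1 A, G2 A); [apply: G_prd | rewrite FG].
by rewrite (card_in_imset (can_in_inj GF)) cardsX.
Qed.
End Fiber.
End Decomp.

Lemma card_part (aT rT : finType) (X : {set aT}) (f : aT -> rT) :
  #|X| = \sum_(r : rT) #|[set x in X | f x == r]|.
Proof.
rewrite -sum1_card (partition_big f xpredT) //=; apply: eq_bigr => r _.
by rewrite -sum1_card; apply: eq_bigl => x; rewrite !inE.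
Qed.

Lemma card_part_nat (aT : finType) (X : {set aT}) (f : aT -> nat) N :
  (forall x, x \in X -> f x < N) ->
  #|X| = \sum_(0 <= k < N) #|[set x in X | f x == k]|.
Proof.
case: N => [|N] H.
  rewrite big_geq //; apply/eqP; rewrite cards_eq0; apply/eqP/setP => x.
  by rewrite inE; apply/negbTE/negP => /H.
rewrite (card_part X (fun x => (inord (f x) : 'I_N.+1))) big_mkord.
apply: eq_bigr => k _; apply: eq_card => x; rewrite !inE.
case: (boolP (x \in X)) => //= xX.
by rewrite -val_eqE /= inordK // H.
Qed.

Lemma sum_card_sets m (F : nat -> nat) :
  \sum_(B : {set 'I_m}) F #|B| = \sum_(i < m.+1) 'C(m, i) * F i.
Proof.
have cm (B : {set 'I_m}) : #|B| < m.+1 by rewrite ltnS; apply: leq_trans (max_card _) _; rewrite card_ord.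
rewrite (partition_big (fun B : {set 'I_m} => (inord #|B| : 'I_m.+1)) xpredT) //=.
apply: eq_bigr => i _.
rewrite (eq_bigr (fun _ => F i)); last first.
  by move=> B /eqP <-; rewrite inordK.
rewrite sum_nat_const; congr (_ * _).
transitivity 'C(#|'I_m|, i); last by rewrite card_ord.
rewrite -card_draws; apply: eq_card => B; rewrite !inE.
by rewrite unfold_in /= inordK.
Qed.

Section Total.
Variables (d' p' n : nat).
Hypothesis d'pos : 0 < d'.
Local Notation tD := (tup d'.+1 p'.+1).

Lemma G1nz (A : {set tD}) v : tconds A -> v \in vals (G1 A) -> v != ord0.
Proof.
move=> tA /valsP [y [a [/imsetP [x xS ->] <-]]]; rewrite ffunE.
move: xS; rewrite inE => /andP [xA _].
apply/eqP => /(F2 tA xA) e.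
by move: (neq_lift ord_max a); rewrite e eqxx.
Qed.

Definition bset (A : {set tD}) : {set 'I_p'} := [set w | lift ord0 w \in vals (G1 A)].

Lemma bV1 (A : {set tD}) : tconds A -> vals (G1 A) = V1 (bset A).
Proof.
move=> tA; apply/setP => v; case: (unliftP ord0 v) => [w|] ->.
  by rewrite /V1 mem_imset ?inE //; apply: lift_inj.
have h1 : ord0 \notin vals (G1 A) by apply/negP => /(G1nz tA); rewrite eqxx.
rewrite (negbTE h1); apply/esym/negbTE/negP => /V1nz.
by rewrite eqxx.
Qed.

Lemma total : Cnt d'.+1 n [set: 'I_p'.+1] =
  \sum_(B0 : {set 'I_p'}) \sum_(1 <= k < n.+1) Cnt d' k (V1 B0) * Cnt d'.+1 (n - k) (W B0).
Proof.
rewrite /Cnt.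
set X := [set A : {set tD} | _].
rewrite (card_part X bset); apply: eq_bigr => B0 _.
rewrite (@card_part_nat _ _ (fun A => #|S A|) n.+1); last first.
  move=> A; rewrite !inE => /andP [/and3P [_ _ /eqP cA] _].
  by rewrite ltnS -cA; apply: subset_leq_card; apply: S_sub.
rewrite big_ltn // [X in X + _](_ : _ = 0) ?add0n; last first.
  apply/eqP; rewrite cards_eq0; apply/eqP/setP => A; rewrite !inE.
  apply/negbTE/negP => /andP [/andP [/and3P [tA /eqP vA _] _] /eqP c0].
  have : ord0 \in vals A by rewrite vA inE.
  case/valsP => x [j [xA x0]].
  have jm := F2 tA xA x0; subst j.
  have : x \in S A by rewrite inE xA x0 eqxx.
  move=> xS; have : 0 < #|S A| by apply/card_gt0P; exists x.
  by rewrite c0.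
apply: eq_big_nat => k /andP [k1 kn].
rewrite ltnS in kn.
rewrite -(card_fib d'pos B0 k1 kn); apply: eq_card => A; rewrite !inE.
case: (boolP (tconds A)) => //= tA.
rewrite bV1 // (inj_eq (imset_inj (@lift_inj _ ord0))).
by rewrite -!andbA.
Qed.
End Total.

Lemma Pcnt q n d : P q n d.+1 = Cnt d.+1 n [set: 'I_q].
Proof. by rewrite /P stepA stepB. Qed.

Lemma CntP d p n (V : {set 'I_p}) : Cnt d.+1 n V = P #|V| n d.+1.
Proof.
rewrite Pcnt.
have [g [/incrP ig Eg]] := @incr_ex _ (fun v : 'I_p => val v) V (fun x y _ _ => @val_inj _ _ _ x y).
rewrite (relabel d.+1 ig n [set: 'I_#|V|]); congr Cnt.
move/setP: Eg => Ev; apply/setP => v; rewrite -Ev.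
by apply/imsetP/imsetP => [][i _ ->]; exists i.
Qed.

Lemma Cnt1 p n : Cnt 1 n [set: 'I_p] = (n == p).
Proof.
rewrite /Cnt.
have E (A : {set tup 1 p}) : tconds A && (vals A == [set: 'I_p]) = (A == [set: tup 1 p]).
  apply/andP/eqP => [[tA /eqP vA]|->].
    apply/setP => x; rewrite in_setT.
    have : x ord0 \in vals A by rewrite vA inE.
    case/valsP => y [j [yA E]].
    suff -> : x = y by [].
    by apply/ffunP => i; rewrite !ord1 -E; have -> : j = ord0 by rewrite ord1.
  split.
    apply/tcondsP; split.
      by move=> x _ j j'; rewrite (ord1 j) (ord1 j').
    split; first by move=> x y _ _ j j' _; rewrite (ord1 j) (ord1 j').
    split.
      move=> x y _ _ j _ E; apply/ffunP => i.
      by rewrite (ord1 i) -(ord1 j).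
    by move=> x y _ _ j j'; rewrite (ord1 j) (ord1 j').
  apply/eqP/setP => v; rewrite in_setT; apply/valsP.
  by exists [ffun _ => v], ord0; rewrite in_setT ffunE.
have -> : [set A : {set tup 1 p} | [&& tconds A, vals A == [set: 'I_p] & #|A| == n]]
        = if n == p then [set [set: tup 1 p]] else set0.
  apply/setP => A; rewrite inE andbA E.
  have cT : #|[set: tup 1 p]| = p by rewrite cardsT card_ffun !card_ord expn1.
  case: (boolP (A == [set: tup 1 p])) => [/eqP ->|nA] /=.
    by rewrite cT; case: (n =P p) => [->|]; rewrite ?inE ?eqxx // eq_sym => /eqP /negbTE ->.
  by case: ifP => _; rewrite ?inE ?(negbTE nA).
by case: ifP => _; rewrite ?cards1 ?cards0.
Qed.

Lemma P_empty p n d : n * d = 0 -> P p n d = ((p == 0) && ((0 < d) || (n <= 1))).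
Proof.
move=> nd0.
have noidx (x : CRidx n d) : False.
  case: x => i j; have : 0 < n * d.
    by rewrite muln_gt0 (leq_ltn_trans (leq0n i) (ltn_ord i)) (leq_ltn_trans (leq0n j) (ltn_ord j)).
  by rewrite nd0.
have sz (c : CRdata n d 1) : CRsize c = 0.
  apply/eqP; rewrite cards_eq0; apply/eqP/setP => C; rewrite inE.
  by apply/negbTE/imsetP => [[x]]; case: (noidx x).
have isc (c : CRdata n d 1) : is_CR c = ((0 < d) || (n <= 1)).
  rewrite /is_CR.
  have -> : is_total_preorder c = true by apply/andP; split; apply/forallP => x; case: (noidx x).
  have -> : cond2 c = true.
    by apply/forallP => i; apply/forallP => i'; apply/forallP => j; case: (noidx (i, j)).
  have -> : cond3 c = true.
    by apply/forallP => i; apply/forallP => j; case: (noidx (i, j)).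
  have -> : cond4 c = true.
    by apply/forallP => i; apply/forallP => i'; apply/forallP => j; case: (noidx (i, j)).
  have -> : cond5 c = true.
    by apply/forallP => i; apply/forallP => i'; apply/forallP => j; case: (noidx (i, j)).
  rewrite !andbT /cond1.
  case: (posnP d) => [d0|dpos].
    have cy (i : 'I_n) : val (crY c i) = 0 by case: (crY c i) => [[|]].
    apply/forallP/idP => [H|n1 i] /=.
      rewrite leqNgt; apply/negP => n2.
      have o0 : 0 < n by apply: ltn_trans n2.
      move: (H (Ordinal o0)) => /forallP /(_ (Ordinal n2)) /implyP.
      by rewrite !cy ltnn => /(_ isT).
    apply/forallP => i'; apply/implyP => lt.
    by move: (ltn_ord i'); rewrite ltnNge (leq_trans n1) // (leq_trans _ lt).
  apply/forallP => i; apply/forallP => i'; apply/forallP => j.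
  by case: (noidx (i, j)).
have card1 : #|CRdata n d 1| = 1.
  rewrite /CRdata card_prod !card_ffun !card_ord exp1n card_prod /CRidx card_prod !card_ord nd0.
  by [].
rewrite /P /Pcount.
have -> : [set c : CRdata n d 1 | is_CR c & CRsize c == p] =
          if (p == 0) && ((0 < d) || (n <= 1)) then [set: CRdata n d 1] else set0.
  apply/setP => c; rewrite inE isc sz eq_sym.
  by case: ifP => H; rewrite ?inE // andbC H.
by case: ifP => _; rewrite ?cardsT ?card1 ?cards0.
Qed.

Lemma P0 n d : 0 < n -> 0 < d -> P 0 n d = 0.
Proof.
move=> n0 d0; apply/eqP; rewrite /P /Pcount cards_eq0; apply/eqP/setP => c; rewrite !inE.
apply/negbTE; rewrite negb_and; apply/orP; right.
rewrite -lt0n /CRsize card_gt0; apply/set0Pn.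
by exists [set y | crequiv c (Ordinal n0, Ordinal d0) y]; apply: imset_f.
Qed.

Lemma Prec d p' n : P p'.+1 n d.+2 =
  \sum_(i < p'.+1) 'C(p', i) * \sum_(1 <= k < n.+1) P i k d.+1 * P (p' - i) (n - k) d.+2.
Proof.
rewrite Pcnt (@total d.+1 p' n (ltn0Sn _)).
rewrite -(sum_card_sets p' (fun i => \sum_(1 <= k < n.+1) P i k d.+1 * P (p' - i) (n - k) d.+2)).
apply: eq_bigr => B0 _; apply: eq_bigr => k _.
rewrite !CntP.
have -> : #|V1 B0| = #|B0| by rewrite card_imset //; apply: lift_inj.
have -> : #|W B0| = p' - #|B0|.
  rewrite card_imset; last by apply: lift_inj.
  have := cardsC B0; rewrite card_ord; move: (#|B0|) (#|~: B0|) => a b e.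
  by rewrite -e addKn.
by [].
Qed.

Theorem lemma8p1 (n d p : nat) :
  (d = 0 -> 2 <= n -> P p n d = 0) /\
      (n = 0 -> p = 0 -> P p n d = 1) /\
      (n = 0 -> 1 <= p -> P p n d = 0) /\
      (d = 0 -> n = 1 -> p = 0 -> P p n d = 1) /\
      (d = 0 -> n = 1 -> 1 <= p -> P p n d = 0) /\
      (d = 1 -> 1 <= n -> n = p -> P p n d = 1) /\
      (d = 1 -> 1 <= n -> n <> p -> P p n d = 0) /\
      (2 <= d -> 1 <= n -> p = 0 -> P p n d = 0) /\
      (2 <= d -> 1 <= n -> 1 <= p ->
         P p n d = \sum_(1 <= j < n.+1) \sum_(0 <= i < p)
                     'C(p.-1, i) * P i j d.-1 * P (p.-1 - i) (n - j) d).
Proof.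
split.
  move=> d0 n2; subst d; rewrite P_empty ?muln0 //.
  by case: n n2 => [|[|n]] // _; rewrite andbF.
split.
  by move=> n0 p0; subst; rewrite P_empty // orbT.
split.
  move=> n0 p1; subst; rewrite P_empty //.
  by case: p p1.
split.
  by move=> d0 n1 p0; subst; rewrite P_empty.
split.
  move=> d0 n1 p1; subst; rewrite P_empty //.
  by case: p p1.
split.
  by move=> d1 n1 np; subst; rewrite Pcnt Cnt1 eqxx.
split.
  by move=> d1 n1 np; subst; rewrite Pcnt Cnt1; move/eqP/negbTE: np => ->.
split.
  move=> d2 n1 p0; subst; apply: P0 => //.
  by apply: leq_trans d2.
move=> d2 n1 p1.
case: d d2 => [|[|d]] // _; case: p p1 => [|p'] // _.
rewrite Prec /=.
rewrite [RHS](eq_bigr (fun j => \sum_(i < p'.+1) 'C(p', i) * P i j d.+1 * P (p' - i) (n - j) d.+2)); last first.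
  by move=> j _; rewrite big_mkord.
rewrite [RHS]exchange_big /=; apply: eq_bigr => i _.
rewrite big_distrr /=; apply: eq_bigr => k _.
by rewrite mulnA.
Qed.
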